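(* Let $Z\subseteq\Sigma^{\mathbb Z}$ be a sofic shift, $\tilde f:\mathbb R^n\times\Sigma\to\mathbb R^n$, and consider the switched system $x(k+1)=\tilde f(x(k),z_k)$ driven by $\bar z\in Z$ (i.e. $f(x,\bar z)=\tilde f(x,z_0)$). Let $(C_1,\dots,C_K)$ be any graph-induced covering of $Z$ and $\mathcal G$ any presentation of it. The system is globally uniformly asymptotically stable if and only if there exists a $\mathcal G$-based Lyapunov function for it.
   Context: $\Sigma$ nonempty countable alphabet; $\Sigma^{\mathbb Z}$ bi-infinite sequences $\bar z=(z_k)_{k\in\mathbb Z}$; $\sigma(\bar z)_k=z_{k+1}$. A labeled graph is $\mathcal G=(S,E)$, $S$ finite, $E\subseteq S\times S\times\Sigma$; standing assumption: every node has at least one incoming and one outgoing edge. A bi-infinite walk labeled by $\bar z$ is $(e_k)_{k\in\mathbb Z}$ with $e_k=(s_k,s_{k+1},z_k)\in E$, starting at $s_0$. $\mathcal Z(\mathcal G)$ / $\mathcal Z(\mathcal G,s)$: labels of all bi-infinite walks / those starting at $s$. Sofic shift: a set $\mathcal Z(\mathcal G)$. Graph-induced covering of $Z$ with presentation $\mathcal G$: a family $(C_1,\dots,C_K)$ with $\mathcal G$ having nodes $s_1,\dots,s_K$, $\mathcal Z(\mathcal G)=Z$ and $C_j=\mathcal Z(\mathcal G,s_j)$. $\Phi(k,x_0,\bar z)$ is the solution at time $k$ with $x(0)=x_0$. Class $\mathcal K_\infty$ and $\mathcal{KL}$ as usual. GUAS: there is $\beta\in\mathcal{KL}$ with $|\Phi(k,x_0,\bar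 z)|\le\beta(|x_0|,k)$ for all $k\in\mathbb N,x_0\in\mathbb R^n,\bar z\in Z$. A $\mathcal G$-based Lyapunov function is $W:\mathbb R^n\times\{1,\dots,K\}\to\mathbb R$ such that there are $\alpha_1,\alpha_2\in\mathcal K_\infty$, $\gamma\in[0,1)$ with $\alpha_1(|x|)\le W(x,j)\le\alpha_2(|x|)$ for all $x,j$ and $W(f(x,\bar z),l)\le\gamma W(x,j)$ for all $x$, all edges $(s_j,s_l,i)\in E$ and all $\bar z\in C_j$ with $z_0=i$, $\sigma(\bar z)\in C_l$ (for switched systems: $W(\tilde f(x,i),l)\le\gamma W(x,j)$ for every edge $(s_j,s_l,i)\in E$). *)

(* Defs.v *)
From HB Require Import structures.
From mathcomp Require Import all_boot all_order all_algebra.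
From mathcomp Require Import all_classical all_reals all_analysis.
Set Implicit Arguments. Unset Strict Implicit. Unset Printing Implicit Defensive.
Import Order.TTheory GRing.Theory Num.Theory.
Local Open Scope ring_scope.
Local Open Scope classical_set_scope.

Definition vnorm (R : realType) (n : nat) (x : 'rV[R]_n) : R :=
  Num.sqrt (\sum_(i < n) x ord0 i ^+ 2).

Definition classK (R : realType) (a : R -> R) : Prop :=
  {within [set x : R^o | 0 <= x], continuous (a : R^o -> R^o)} /\ a 0 = 0 /\
  (forall x y : R, 0 <= x -> x < y -> a x < a y).

Definition classKinf (R : realType) (a : R -> R) : Prop :=
  classK a /\ (forall M : R, exists r : R, 0 <= r /\ M <= a r).

Definition classKL (R : realType) (b : R -> nat -> R) : Prop :=
  (forall k : nat, classK (fun r => b r k)) /\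
  (forall r : R, 0 <= r ->
     (forall k : nat, b r k.+1 <= b r k) /\ ((fun k => b r k : R^o) @ \oo --> (0 : R^o))).

(* Labeled graphs: nodes S (finite), edges E : S -> S -> Sigma -> Prop,
   E s s' i  means  (s, s', i) is an edge. *)
Definition standing (S : finType) (Sig : Type) (E : S -> S -> Sig -> Prop) : Prop :=
  forall s : S, (exists s' i, E s' s i) /\ (exists s' i, E s s' i).

Definition is_walk (S : finType) (Sig : Type) (E : S -> S -> Sig -> Prop)
  (z : int -> Sig) (w : int -> S) : Prop :=
  forall k : int, E (w k) (w (k + 1)) (z k).

Definition ZG (S : finType) (Sig : Type) (E : S -> S -> Sig -> Prop) : set (int -> Sig) :=
  [set z | exists w, is_walk E z w].
Definition ZGs (S : finType) (Sig : Type) (E : S -> S -> Sig -> Prop) (s : S)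
  : set (int -> Sig) :=
  [set z | exists w, is_walk E z w /\ w 0 = s].

Definition shift (Sig : Type) (z : int -> Sig) : int -> Sig := fun k => z (k + 1).

Fixpoint Phi (X Sig : Type) (ft : X -> Sig -> X) (k : nat) (x0 : X) (z : int -> Sig) : X :=
  match k with
  | 0 => x0
  | k'.+1 => ft (Phi ft k' x0 z) (z (Posz k'))
  end.

Definition GUAS (R : realType) (n : nat) (Sig : Type)
  (ft : 'rV[R]_n -> Sig -> 'rV[R]_n) (Z : set (int -> Sig)) : Prop :=
  exists b : R -> nat -> R, classKL b /\
    forall (k : nat) (x0 : 'rV[R]_n) (z : int -> Sig), Z z ->
      vnorm (Phi ft k x0 z) <= b (vnorm x0) k.

(* G-based Lyapunov function for the switched system (the covering sets C_j
   are indexed by the nodes of G) *)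
Definition GLyapunov (R : realType) (n : nat) (Sig : Type) (S : finType)
  (ft : 'rV[R]_n -> Sig -> 'rV[R]_n) (E : S -> S -> Sig -> Prop)
  (W : 'rV[R]_n -> S -> R) : Prop :=
  exists (a1 a2 : R -> R) (gamma : R),
    classKinf a1 /\ classKinf a2 /\ 0 <= gamma /\ gamma < 1 /\
    (forall x j, a1 (vnorm x) <= W x j /\ W x j <= a2 (vnorm x)) /\
    (forall x j l i, E j l i -> W (ft x i) l <= gamma * W x j).

(* Main.v *)
Require Import Defs.
From HB Require Import structures.
From mathcomp Require Import all_boot all_order all_algebra.
From mathcomp Require Import all_classical all_reals all_analysis.
From mathcomp Require Import ring lra zify.
Set Implicit Arguments. Unset Strict Implicit. Unset Printing Implicit Defensive.
Import Order.TTheory GRing.Theory Num.Theory.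
Import numFieldNormedType.Exports.
Local Open Scope ring_scope.
Local Open Scope classical_set_scope.

Section S.
Variable R : realType.
Definition cont0 (f : R -> R) := forall x, 0 <= x -> forall e, 0 < e -> exists2 d, 0 < d &
  forall y, 0 <= y -> `|y - x| < d -> `|f y - f x| < e.

Lemma cont0_within (f : R -> R) : cont0 f ->
  {within [set x : R^o | 0 <= x], continuous (f : R^o -> R^o)}.
Proof.
move=> cf; apply/subspace_continuousP => x /= x0.
apply/cvgrPdist_lt => e e0.
have [d d0 H] := cf x x0 e e0.
rewrite /within /=; apply/nbhs_ballP; exists d => //= y; rewrite /ball /= => xy y0.
rewrite distrC; apply: H => //; rewrite distrC //.
Qed.

Lemma within_cont0 (f : R -> R) :
  {within [set x : R^o | 0 <= x], continuous (f : R^o -> R^o)} -> cont0 f.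
Proof.
move=> /subspace_continuousP cf x x0 e e0.
have := cf x x0; move/cvgrPdist_lt => /(_ e e0).
rewrite /within /= => /nbhs_ballP [d /= d0 H]; exists d => // y y0 yx.
rewrite distrC; apply: H => //; rewrite /ball /= distrC //.
Qed.

Definition sinc (f : R -> R) := forall x y : R, 0 <= x -> x < y -> f x < f y.

Lemma classKP (f : R -> R) : classK f <-> [/\ cont0 f, f 0 = 0 & sinc f].
Proof.
split; first by case=> c [f0 s]; split => //; exact: within_cont0.
by case=> c f0 s; split; [exact: cont0_within|].
Qed.

Lemma sinc_le (f : R -> R) x y : sinc f -> 0 <= x -> x <= y -> f x <= f y.
Proof. by move=> s x0; rewrite le_eqVlt => /orP[/eqP->//|/(s _ _ x0)/ltW]. Qed.

Lemma sinc_ge0 (f : R -> R) x : sinc f -> f 0 = 0 -> 0 <= x -> 0 <= f x.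
Proof. by move=> s f0 x0; rewrite -f0; apply: sinc_le. Qed.

Lemma sinc_ltW (f : R -> R) x y : sinc f -> 0 <= x -> 0 <= y -> f x < f y -> x < y.
Proof.
move=> s x0 y0 fxy; rewrite ltNge; apply/negP => yx.
by move: (sinc_le s y0 yx); rewrite leNgt fxy.
Qed.

Lemma sinc_leW (f : R -> R) x y : sinc f -> 0 <= x -> 0 <= y -> f x <= f y -> x <= y.
Proof.
move=> s x0 y0 fxy; rewrite leNgt; apply/negP => yx.
by move: (s _ _ y0 yx); rewrite ltNge fxy.
Qed.

Lemma Kinf_inv (f : R -> R) : classKinf f ->
  exists g : R -> R, [/\ classKinf g, (forall y, 0 <= y -> 0 <= g y /\ f (g y) = y)
     & (forall x, 0 <= x -> g (f x) = x)].
Proof.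
move=> [/classKP [c f0 s] ub].
have ex : forall y : R, exists t, 0 <= t /\ f t = Num.max y 0.
  move=> y; have [r [r0 yr]] := ub (Num.max y 0).
  have cw : {within `[0, r], continuous f}.
    apply: (@continuous_subspaceW _ _ _ [set x : R^o | 0 <= x]); last exact: cont0_within.
    by move=> t; rewrite /= in_itv /= => /andP[].
  have hv : Num.min (f 0) (f r) <= Num.max y 0 <= Num.max (f 0) (f r).
    rewrite f0; apply/andP; split.
      by rewrite ge_min le_max lexx orbT.
    by rewrite le_max yr orbT.
  have [t t0r ft] := @IVT _ f 0 r (Num.max y 0) r0 cw hv.
  by exists t; move: t0r; rewrite in_itv /= => /andP[t0 _].
have [g gP] := choice ex.
have gK : forall x, 0 <= x -> g (f x) = x.
  move=> x x0; have [g0 fg] := gP (f x).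
  have fx0 : 0 <= f x by apply: sinc_ge0.
  move: fg; rewrite (max_idPl fx0) => fg.
  apply/le_anti/andP; split; apply: (sinc_leW s) => //; rewrite fg //.
have fK : forall y, 0 <= y -> 0 <= g y /\ f (g y) = y.
  by move=> y y0; have [g0 fg] := gP y; split => //; rewrite fg (max_idPl y0).
have gs : sinc g.
  move=> x y x0 xy; have y0 : 0 <= y by apply: le_trans (ltW xy).
  have [gx0 fgx] := fK x x0; have [gy0 fgy] := fK y y0.
  by apply: (sinc_ltW s) => //; rewrite fgx fgy.
exists g; split => //; split.
  apply/classKP; split => //; last by rewrite -f0 gK.
  move=> y0 y00 e e0.
  set s0 := g y0.
  have [s00 fs0] := fK y0 y00.
  have d1P : 0 < f (s0 + e) - y0 by rewrite subr_gt0 -{1}fs0 s // ltrDl.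
  pose d2 := if 0 <= s0 - e then y0 - f (s0 - e) else 1.
  have d2P : 0 < d2.
    rewrite /d2; case: ifP => // h; rewrite subr_gt0 -{1}fs0 s //.
    by rewrite gtrBl.
  exists (Num.min (f (s0 + e) - y0) d2); first by rewrite lt_min d1P.
  move=> y y0' ; rewrite lt_min => /andP[h1 h2].
  have [gy0 fgy] := fK y y0'.
  have up : g y < s0 + e.
    apply: (sinc_ltW s) => //; first by rewrite addr_ge0 // ltW.
    rewrite fgy; move: h1; rewrite ltr_norml => /andP[_ h1]; lra.
  have lo : s0 - e < g y.
    move: h2; rewrite /d2; case: ifP => [h|h _]; last first.
      by apply: lt_le_trans gy0; rewrite ltNge h.
    move=> h2; apply: (sinc_ltW s) => //; rewrite fgy.
    move: h2; rewrite ltr_norml => /andP[h2 _]; lra.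
  rewrite ltr_norml; apply/andP; split; lra.
move=> M; have [/= M0|M0] := leP 0 M.
  by exists (f M); split; [exact: sinc_ge0|rewrite gK].
by exists 0; split => //; rewrite -f0 gK // ltW.
Qed.

Section Llow.
Variable h : R -> R.
Hypothesis hmono : forall s t, 0 <= s -> s <= t -> h s <= h t.
Hypothesis hge0 : forall s, 0 <= s -> 0 <= h s.
Hypothesis hpos : forall s, 0 < s -> 0 < h s.
Hypothesis hunb : forall M, exists s, 0 <= s /\ M <= h s.

Let Hs (s : R) := inf [set h t + `|s - t| | t in [set t : R | 0 <= t]].

Let Hs_le s t : 0 <= t -> Hs s <= h t + `|s - t|.
Proof.
move=> t0; apply: ge_inf; last by exists t.
exists 0 => y [u /= u0 <-]; by rewrite addr_ge0 ?hge0.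
Qed.

Let Hs_ge s c : (forall t, 0 <= t -> c <= h t + `|s - t|) -> c <= Hs s.
Proof.
move=> H; apply: lb_le_inf; first by exists (h 0 + `|s - 0|); exists 0 => /=.
by move=> y [u /= u0 <-]; apply: H.
Qed.

Let Hs_lip s s' : Hs s - `|s - s'| <= Hs s'.
Proof.
apply: Hs_ge => t t0; rewrite lerBlDr.
apply: le_trans (Hs_le s t0) _; rewrite -addrA lerD2l.
have -> : s - t = (s' - t) + (s - s') by ring.
exact: ler_normD.
Qed.

Let Hs_ge0 s : 0 <= Hs s.
Proof. by apply: Hs_ge => t t0; rewrite addr_ge0 ?hge0. Qed.

Let Hs_leh s : 0 <= s -> Hs s <= h s.
Proof. by move=> s0; apply: le_trans (Hs_le s s0) _; rewrite subrr normr0 addr0. Qed.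

Let Hs_mono s s' : 0 <= s -> s <= s' -> Hs s <= Hs s'.
Proof.
move=> s0 ss'; apply: Hs_ge => t t0.
have [ts|st] := leP t s.
  apply: le_trans (Hs_le s t0) _; rewrite lerD2l !ger0_norm ?subr_ge0 //.
    by rewrite lerD2r.
  by apply: le_trans ss'.
apply: le_trans (Hs_leh s0) _; apply: le_trans (hmono s0 (ltW st)) _.
by rewrite lerDl.
Qed.

Let Hs_low s : 0 <= s -> Num.min (h (s / 2)) (s / 2) <= Hs s.
Proof.
move=> s0; apply: Hs_ge => t t0.
have [ts|st] := leP (s / 2) t.
  rewrite ge_min; apply/orP; left; apply: le_trans (hmono _ ts) _.
    by rewrite divr_ge0.
  by rewrite lerDl.
rewrite ge_min; apply/orP; right; apply: le_trans (_ : `|s - t| <= _).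
  rewrite ger0_norm; first lra.
  rewrite subr_ge0; lra.
by rewrite lerDr hge0.
Qed.

Lemma Llow_ex : exists a, classKinf a /\ forall s, 0 <= s -> a s <= h s.
Proof.
pose q (s : R) := s / (1 + s).
pose a s := Hs s * q s.
have q01 s : 0 <= s -> 0 <= q s <= 1.
  move=> s0; have p : 0 < 1 + s by rewrite ltr_pwDl.
  apply/andP; split; first by rewrite /q divr_ge0 // ltW.
  by rewrite /q ler_pdivrMr // mul1r lerDr.
have qlip s t : 0 <= s -> 0 <= t -> `|q t - q s| <= `|t - s|.
  move=> s0 t0; rewrite /q.
  have -> : t / (1 + t) - s / (1 + s) = (t - s) / ((1 + t) * (1 + s)).
    field; apply/andP; split; rewrite gt_eqF // ltr_pwDl //.
  have hp : 1 <= (1 + t) * (1 + s) by nra.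
  have hp0 : 0 < (1 + t) * (1 + s) by apply: lt_le_trans hp.
  rewrite normrM; apply: ler_piMr; first exact: normr_ge0.
  by rewrite normfV gtr0_norm // invf_le1.
have qs s t : 0 <= s -> s < t -> q s < q t.
  move=> s0 st; have t0 : 0 < t by apply: le_lt_trans st.
  rewrite -subr_gt0 /q.
  have -> : t / (1 + t) - s / (1 + s) = (t - s) / ((1 + t) * (1 + s)).
    field; apply/andP; split; rewrite gt_eqF // ltr_pwDl // ltW //.
  by rewrite divr_gt0 ?subr_gt0 // mulr_gt0 // ltr_pwDl // ltW.
exists a; split; last first.
  move=> s s0; apply: le_trans (Hs_leh s0); rewrite /a ler_piMr //.
  by case/andP: (q01 s s0).
split.
  apply/classKP; split.
  - move=> x x0 e e0; exists (e / (1 + Hs x)).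
      by rewrite divr_gt0 // ltr_pwDl.
    move=> y y0 yx.
    have -> : a y - a x = (Hs y - Hs x) * q y + Hs x * (q y - q x).
      rewrite /a; ring.
    apply: le_lt_trans (ler_normD _ _) _.
    rewrite (normrM (Hs y - Hs x)) (normrM (Hs x)) (ger0_norm (Hs_ge0 x)).
    have h1 : `|Hs y - Hs x| <= `|y - x|.
      rewrite ler_norml; apply/andP; split.
        by have := Hs_lip x y; rewrite (distrC x) => ?; lra.
      by have := Hs_lip y x => ?; lra.
    have h2 := qlip x y x0 y0.
    have h3 : `|q y| <= 1 by rewrite ger0_norm; case/andP: (q01 y y0).
    have h4 : `|y - x| * (1 + Hs x) < e.
      by rewrite -ltr_pdivlMr // ltr_pwDl.
    have h5 := Hs_ge0 x.
    have h6 := normr_ge0 (Hs y - Hs x).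
    have h7 := normr_ge0 (q y - q x).
    have h8 : `|Hs y - Hs x| * `|q y| <= `|y - x|.
      apply: le_trans h1; apply: ler_piMr => //.
    have h9 : Hs x * `|q y - q x| <= Hs x * `|y - x| by apply: ler_wpM2l.
    have h10 : `|y - x| * (1 + Hs x) = `|y - x| + Hs x * `|y - x| by ring.
    lra.
  - by rewrite /a /q mul0r mulr0.
  - move=> x y x0 xy; rewrite /a.
    have y0 : 0 < y by apply: le_lt_trans xy.
    have hy : 0 < Hs y.
      apply: lt_le_trans (Hs_low (ltW y0)).
      by rewrite lt_min hpos ?divr_gt0.
    apply: (@le_lt_trans _ _ (Hs y * q x)).
      by apply: ler_wpM2r; [case/andP: (q01 x x0)|apply: Hs_mono => //; exact: ltW].
    by rewrite ltr_pM2l // qs.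
move=> M.
have [s [s0 hs]] := hunb (2 * (Num.max M 0)).
exists (Num.max (2 * s) (Num.max (4 * M) 1)); split.
  by rewrite !le_max ler01 !orbT.
set t := Num.max _ _.
have t0 : 1 <= t by rewrite !le_max lexx !orbT.
have t2s : 2 * s <= t by rewrite le_max lexx.
have t4M : 4 * M <= t by rewrite !le_max lexx !orbT.
have := Hs_low (le_trans ler01 t0).
have hq : 1 / 2 <= q t.
  rewrite /q ler_pdivlMr ?ltr_pwDl ?(le_trans ler01) //; lra.
have hts : h s <= h (t / 2).
  by apply: hmono => //; rewrite ler_pdivlMr //; lra.
move=> hl; rewrite /a.
have hm : 2 * Num.max M 0 <= Hs t.
  apply: le_trans hl; rewrite le_min; apply/andP; split.
    by apply: le_trans hts.
  case: (leP 0 M) => M0 /=; lra.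
have ? : M <= Num.max M 0 by rewrite le_max lexx.
have ? : 0 <= Num.max M 0 by rewrite le_max lexx orbT.
have hHs := Hs_ge0 t.
nra.
Qed.
End Llow.

Lemma Kinf_parts (f : R -> R) : classKinf f -> [/\ cont0 f, f 0 = 0, sinc f &
  forall M, exists r, 0 <= r /\ M <= f r].
Proof. by case=> /classKP[c f0 s] u. Qed.

Section Lup.
Variable g : R -> R.
Hypothesis gmono : forall s t, 0 <= s -> s <= t -> g s <= g t.
Hypothesis gge0 : forall s, 0 <= s -> 0 <= g s.
Hypothesis gsmall : forall e, 0 < e -> exists2 d, 0 < d & forall r, 0 <= r -> r < d -> g r < e.
Hypothesis gunb : forall M, exists r, 0 <= r /\ M <= g r.

Let h (y : R) := inf [set r | 0 <= r /\ y <= g r].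

Let h_le y r : 0 <= r -> y <= g r -> h y <= r.
Proof. by move=> r0 yr; apply: ge_inf => //; exists 0 => u [] //. Qed.

Let h_ge y c : (forall r, 0 <= r -> y <= g r -> c <= r) -> c <= h y.
Proof.
move=> H; apply: lb_le_inf; last by move=> u [] /H; apply.
by have [r [r0 yr]] := gunb y; exists r.
Qed.

Lemma Lup_ex : exists a, classKinf a /\ forall r, 0 <= r -> g r <= a r.
Proof.
have hmono : forall s t, 0 <= s -> s <= t -> h s <= h t.
  move=> s t s0 st; apply: h_ge => r r0 tr; apply: h_le => //; exact: le_trans tr.
have hge0 : forall s, 0 <= s -> 0 <= h s by move=> s _; apply: h_ge.
have hpos : forall s, 0 < s -> 0 < h s.
  move=> s s0; have [d d0 Hd] := gsmall s0; apply: lt_le_trans d0 _.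
  apply: h_ge => r r0 sr; rewrite leNgt; apply/negP => rd.
  by move: (Hd r r0 rd); rewrite ltNge sr.
have hunb : forall M, exists s, 0 <= s /\ M <= h s.
  move=> M; set m := Num.max M 0.
  have m0 : 0 <= m by rewrite le_max lexx orbT.
  have Mm : M <= m by rewrite le_max lexx.
  exists (g m + 1); split; first by rewrite addr_ge0 ?gge0.
  apply: (le_trans Mm); apply: h_ge => r r0 gr; rewrite leNgt; apply/negP => rm.
  by have := gmono r0 (ltW rm); lra.
have [b [bK bh]] := Llow_ex hmono hge0 hpos hunb.
have [a [aK ab ba]] := Kinf_inv bK.
exists a; split => // r r0.
have [bc b0 bs bu] := Kinf_parts bK.
have [ac a0 as_ au] := Kinf_parts aK.
have gr0 := gge0 r0.
rewrite -(ba _ gr0); apply: sinc_le => //.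
  exact: sinc_ge0.
by apply: le_trans (bh _ gr0) _; apply: h_le.
Qed.
End Lup.

Lemma cont0_comp (f g : R -> R) : cont0 f -> cont0 g -> (forall x, 0 <= x -> 0 <= g x) ->
  cont0 (fun x => f (g x)).
Proof.
move=> cf cg gp x x0 e e0.
have [d1 d10 H1] := cf (g x) (gp x x0) e e0.
have [d2 d20 H2] := cg x x0 d1 d10.
by exists d2 => // y y0 yx; apply: H1; [exact: gp|exact: H2].
Qed.

Lemma cont0_scale (f : R -> R) c : cont0 f -> 0 <= c -> cont0 (fun x => c * f x).
Proof.
move=> cf c0 x x0 e e0.
have e1 : 0 < e / (c + 1) by rewrite divr_gt0 // ltr_pwDr.
have [d d0 H] := cf x x0 _ e1.
exists d => // y y0 yx; rewrite -mulrBr normrM ger0_norm //.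
have := H y y0 yx; rewrite ltr_pdivlMr ?ltr_pwDr // => h.
have := normr_ge0 (f y - f x); nra.
Qed.

Lemma vnorm_ge0 n (x : 'rV[R]_n) : 0 <= vnorm x.
Proof. exact: sqrtr_ge0. Qed.

Lemma PoszS (k : nat) : (Posz k + 1)%R = Posz k.+1.
Proof. by rewrite -addn1 PoszD. Qed.

Section Dir1.
Variables (n : nat) (Sig : Type) (S : finType) (E : S -> S -> Sig -> Prop)
  (ft : 'rV[R]_n -> Sig -> 'rV[R]_n).

Lemma lyap_guas W : GLyapunov ft E W -> GUAS ft (ZG E).
Proof.
case=> a1 [a2 [gam [a1K [a2K [g0 [g1 [Hb Hd]]]]]]].
set gm := Num.max gam (2^-1).
have gm0 : 0 < gm by rewrite lt_max invr_gt0 ltr0n orbT.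
have gm1 : gm < 1 by rewrite gt_max g1 invf_lt1 ?ltr0n // ltr1n.
have gamle : gam <= gm by rewrite le_max lexx.
have [ai [aiK aiR aiL]] := Kinf_inv a1K.
have [aic ai0 ais aiu] := Kinf_parts aiK.
have [a1c a10 a1s a1u] := Kinf_parts a1K.
have [a2c a20 a2s a2u] := Kinf_parts a2K.
have a2p r : 0 <= r -> 0 <= a2 r by move=> r0; apply: sinc_ge0.
have aip r : 0 <= r -> 0 <= ai r by move=> r0; apply: sinc_ge0.
have gmk k : 0 < gm ^+ k by rewrite exprn_gt0.
exists (fun r k => ai (gm ^+ k * a2 r)); split.
  split.
    move=> k; apply/classKP; split.
    - apply: cont0_comp => //; last first.
        by move=> x x0; rewrite mulr_ge0 ?a2p // ltW.
      by apply: cont0_scale => //; rewrite ltW.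
    - by rewrite a20 mulr0.
    - move=> x y x0 xy; apply: ais; first by rewrite mulr_ge0 ?a2p // ltW.
      by rewrite ltr_pM2l // a2s.
  move=> r r0; split.
    move=> k; apply: sinc_le => //; first by rewrite mulr_ge0 ?a2p // ltW.
    rewrite exprS -mulrA ler_piMl //; first by rewrite mulr_ge0 ?a2p // ltW.
    exact: ltW.
  apply/cvgrPdist_lt => e e0.
  have [d d0 Hd'] := aic 0 (lexx _) e e0.
  have dd : 0 < d / (a2 r + 1) by rewrite divr_gt0 // ltr_pwDr // ?a2p.
  have := @cvg_expr _ gm; rewrite gtr0_norm // => /(_ gm1).
  move/cvgrPdist_lt => /(_ _ dd); apply: filterS => k /=.
  rewrite sub0r normrN ger0_norm ?ltW // => hk.
  have hp : 0 <= gm ^+ k * a2 r by apply: mulr_ge0; [exact: ltW|exact: a2p].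
  have hlt : `|gm ^+ k * a2 r - 0| < d.
    rewrite subr0 ger0_norm //.
    move: hk; rewrite ltr_pdivlMr ?ltr_pwDr ?a2p // => hk.
    have := a2p r r0; have := gmk k; nra.
  have := Hd' _ hp hlt; rewrite ai0 subr0 => H; rewrite sub0r normrN; exact: H.
move=> k x0 z [w Hw].
have Wge0 x j : 0 <= W x j.
  have [h1 _] := Hb x j; apply: le_trans h1; apply: sinc_ge0 => //; exact: vnorm_ge0.
have key : forall k, W (Phi ft k x0 z) (w (Posz k)) <= gm ^+ k * W x0 (w 0).
  elim=> [|m IH]; first by rewrite expr0 mul1r.
  have := Hd (Phi ft m x0 z) _ _ _ (Hw (Posz m)); rewrite PoszS /= => h.
  apply: le_trans h _; rewrite exprS -mulrA.
  apply: (@le_trans _ _ (gm * W (Phi ft m x0 z) (w (Posz m)))).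
    by apply: ler_wpM2r.
  by apply: ler_wpM2l => //; exact: ltW.
rewrite -(aiL _ (vnorm_ge0 (Phi ft k x0 z))); apply: sinc_le => //.
  by apply: sinc_ge0 => //; exact: vnorm_ge0.
have [h1 _] := Hb (Phi ft k x0 z) (w (Posz k)).
apply: le_trans h1 _; apply: le_trans (key k) _.
by apply: ler_wpM2l; [exact: ltW|case: (Hb x0 (w 0))].
Qed.
End Dir1.
End S.

Lemma NegzS (m : nat) : (Negz m + 1)%R = (if m is m'.+1 then Negz m' else Posz 0).
Proof. case: m => [|m] /=; rewrite !NegzE; lia. Qed.

Section Walks.
Variables (Sig : Type) (S : finType) (E : S -> S -> Sig -> Prop).
Hypothesis HE : standing E.

Lemma walk_through (j : S) : exists z w, is_walk E z w /\ w 0%R = j.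
Proof.
have hs : forall s, exists p : S * Sig, E s p.1 p.2.
  by move=> s; have [_ [s' [i e]]] := HE s; exists (s', i).
have hp : forall s, exists p : S * Sig, E p.1 s p.2.
  by move=> s; have [[s' [i e]] _] := HE s; exists (s', i).
have [sc Hsc] := choice hs.
have [pc Hpc] := choice hp.
pose fw m := iter m (fun s => (sc s).1) j.
pose bw m := iter m (fun s => (pc s).1) j.
exists (fun k => match k with Posz m => (sc (fw m)).2 | Negz m => (pc (bw m)).2 end).
exists (fun k => match k with Posz m => fw m | Negz m => bw m.+1 end).
split => // -[m|m].
  by rewrite PoszS /=; exact: Hsc.
rewrite NegzS /=; case: m => [|m] /=; exact: Hpc.
Qed.

Lemma walk_cons (j l : S) (i : Sig) (z' : int -> Sig) : E j l i -> ZGs E l z' ->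
  exists z, [/\ ZGs E j z, z 0%R = i & forall m : nat, z (Posz m.+1) = z' (Posz m)].
Proof.
move=> ejl [w' [Hw' w'0]].
have [z0 [w0 [Hw0 w00]]] := walk_through j.
exists (fun k => match k with Posz 0 => i | Posz m.+1 => z' (Posz m) | Negz _ => z0 k end).
split => //.
exists (fun k => match k with Posz 0 => j | Posz m.+1 => w' (Posz m) | Negz _ => w0 k end).
split => // -[[|m]|m].
- by rewrite /= -w'0 in ejl.
- by rewrite PoszS /=; have := Hw' (Posz m); rewrite PoszS.
- have := Hw0 (Negz m); rewrite NegzS /=.
  by case: m => [|m] //=; rewrite w00.
Qed.
End Walks.

Section PhiL.
Variables (X Sig : Type) (ft : X -> Sig -> X).

Lemma Phi_shift (k : nat) x (z z' : int -> Sig) :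
  (forall m : nat, z' (Posz m) = z (Posz m.+1)) ->
  Phi ft k.+1 x z = Phi ft k (ft x (z (Posz 0))) z'.
Proof.
move=> H; elim: k => [|k IH] //=.
by rewrite -/(Phi ft k.+1 x z) IH H.
Qed.
End PhiL.

Lemma near_oo (P : nat -> Prop) : (\forall k \near \oo, P k) -> exists N, forall k, (N <= k)%N -> P k.
Proof. by move=> [N _ HN]; exists N => k /HN. Qed.

Section Dir2.
Variables (R : realType) (n : nat) (Sig : Type) (S : finType) (E : S -> S -> Sig -> Prop)
  (ft : 'rV[R]_n -> Sig -> 'rV[R]_n).
Hypothesis HE : standing E.
Variable b : R -> nat -> R.
Hypothesis bKL : classKL b.
Hypothesis bbound : forall (k : nat) (x0 : 'rV[R]_n) (z : int -> Sig), ZG E z ->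
      vnorm (Phi ft k x0 z) <= b (vnorm x0) k.

Let bK k : [/\ cont0 (b^~ k), b 0 k = 0 & sinc (b^~ k)].
Proof. by have [h _] := bKL; apply/classKP; exact: h. Qed.

Let bge0 r k : 0 <= r -> 0 <= b r k.
Proof. by move=> r0; case: (bK k) => _ h0 s; exact: (sinc_ge0 s h0 r0). Qed.

Let bmono r r' k : 0 <= r -> r <= r' -> b r k <= b r' k.
Proof. by move=> r0 rr; case: (bK k) => _ _ s; exact: (sinc_le s r0 rr). Qed.

Let bdec r k : 0 <= r -> b r k <= b r 0.
Proof.
move=> r0; have [_ h] := bKL; have [hd _] := h r r0.
elim: k => [//|k IH]; exact: le_trans (hd k) IH.
Qed.

Let bcvg r e : 0 <= r -> 0 < e -> exists N, forall k, (N <= k)%N -> b r k < e.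
Proof.
move=> r0 e0; have [_ h] := bKL; have [_ hc] := h r r0.
move/cvgrPdist_lt : hc => /(_ e e0) /near_oo [N HN]; exists N => k /HN.
by rewrite sub0r normrN ger0_norm ?bge0.
Qed.

Let phi (r : R) := (1 + r)^-1.

Let Gset r := [set y : R | exists k, y = 2 ^+ k /\ (k = 0%N \/ phi r <= b r k)].
Let G r := sup (Gset r).

Let Gub r : 0 <= r -> has_ubound (Gset r).
Proof.
move=> r0; have p0 : 0 < phi r by rewrite invr_gt0 ltr_pwDl.
have [N HN] := bcvg r0 p0.
exists (2 ^+ N) => y [k [-> hk]].
have kN : (k <= N)%N.
  case: hk => [->//|hk]; rewrite leqNgt; apply/negP => /ltnW /HN.
  by rewrite ltNge hk.
by rewrite ler_eXn2l // ltr1n.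
Qed.

Let G_ge r k : 0 <= r -> phi r <= b r k -> 2 ^+ k <= G r.
Proof. by move=> r0 h; apply: (ub_le_sup (Gub r0)); exists k; split => //; right. Qed.

Let G_ge1 r : 0 <= r -> 1 <= G r.
Proof. by move=> r0; apply: (ub_le_sup (Gub r0)); exists 0%N; split => //; left. Qed.

Let G_mono r r' : 0 <= r -> r <= r' -> G r <= G r'.
Proof.
move=> r0 rr; have r'0 : 0 <= r' by apply: le_trans rr.
apply: ge_sup; first by exists 1, 0%N; split => //; left.
move=> y [k [-> [->|hk]]]; first exact: G_ge1.
apply: G_ge => //; apply: le_trans (bmono k r0 rr); apply: le_trans hk.
by rewrite lef_pV2 ?posrE ?ltr_pwDl // lerD2l.
Qed.

Let g r := r * (1 + G r).

Let a2_ex : exists a2, classKinf a2 /\ forall r, 0 <= r -> g r <= a2 r.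
Proof.
apply: Lup_ex.
- move=> s t s0 st; rewrite /g; apply: ler_pM => //.
    by rewrite addr_ge0 // (le_trans ler01) // G_ge1.
  by rewrite lerD2l G_mono.
- by move=> s s0; rewrite /g mulr_ge0 // addr_ge0 // (le_trans ler01) // G_ge1.
- move=> e e0; have G10 := G_ge1 ler01.
  have p1 : 0 < 1 + G 1 by lra.
  exists (Num.min 1 (e / (1 + G 1))).
    by rewrite lt_min ltr01 divr_gt0.
  move=> r r0; rewrite lt_min => /andP[r1 re].
  have := G_mono r0 (ltW r1); move: re; rewrite ltr_pdivlMr // /g => re Gr.
  have := G_ge1 r0; nra.
- move=> M; exists (Num.max M 0); split; first by rewrite le_max lexx orbT.
  set m := Num.max M 0; have m0 : 0 <= m by rewrite le_max lexx orbT.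
  have Mm : M <= m by rewrite le_max lexx.
  have := G_ge1 m0; rewrite /g; nra.
Qed.


Lemma lemax_l (x y : R) : x <= Num.max x y.
Proof. by rewrite le_max lexx. Qed.
Lemma lemax_r (x y : R) : y <= Num.max x y.
Proof. by rewrite le_max lexx orbT. Qed.

Lemma divle_help (c P A : R) : 0 < P -> c * P <= A -> c <= P^-1 * A.
Proof. by move=> P0 h; rewrite mulrC ler_pdivlMr. Qed.

Section Dir2b.
Variable a2 : R -> R.
Hypothesis a2K : classKinf a2.
Hypothesis a2g : forall r, 0 <= r -> g r <= a2 r.

Let a2p r : 0 <= r -> 0 <= a2 r.
Proof. by move=> r0; case: (Kinf_parts a2K) => _ h0 s _; exact: (sinc_ge0 s h0 r0). Qed.

Let Aset s := [set y : R | y = s \/ exists r k, [/\ 0 <= r, s <= b r k & y = (2 ^+ k)^-1 * a2 r]].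
Let al s := inf (Aset s).

Let Alb s : has_lbound (Aset s).
Proof.
exists (Num.min s 0) => y [->|[r [k [r0 _ ->]]]]; first by rewrite ge_min lexx.
by rewrite ge_min; apply/orP; right; rewrite mulr_ge0 ?a2p // invr_ge0 exprn_ge0.
Qed.

Let al_le s y : Aset s y -> al s <= y.
Proof. by move=> h; apply: ge_inf (Alb s) _ h. Qed.

Let al_ge s c : c <= s -> (forall r k, 0 <= r -> s <= b r k -> c <= (2 ^+ k)^-1 * a2 r) ->
  c <= al s.
Proof.
move=> cs H; apply: lb_le_inf; first by exists s; left.
by move=> y [->|[r [k [r0 sb ->]]]] //; apply: H.
Qed.

Let al_b r k : 0 <= r -> al (b r k) <= (2 ^+ k)^-1 * a2 r.
Proof. by move=> r0; apply: al_le; right; exists r, k. Qed.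

Let al_mono s t : 0 <= s -> s <= t -> al s <= al t.
Proof.
move=> s0 st; apply: al_ge.
  by apply: le_trans st; apply: al_le; left.
by move=> r k r0 tb; apply: al_le; right; exists r, k; split => //; exact: le_trans tb.
Qed.

Let al_ge0 s : 0 <= s -> 0 <= al s.
Proof.
by move=> s0; apply: al_ge => // r k r0 _; rewrite mulr_ge0 ?a2p // invr_ge0 exprn_ge0.
Qed.

Let al_pos s : 0 < s -> 0 < al s.
Proof.
move=> s0.
have [c0 _ _] := bK 0.
have [d d0 Hd] := c0 0 (lexx _) s s0.
have hd : forall r, 0 <= r -> r < d -> b r 0 < s.
  move=> r r0 rd; have := Hd r r0; rewrite subr0 ger0_norm // => /(_ rd).
  by case: (bK 0) => _ -> _; rewrite subr0 ger0_norm ?bge0.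
set R0 := s^-1.
have R00 : 0 < R0 by rewrite invr_gt0.
have GR0 := G_ge1 (ltW R00).
have GR0p : 0 < G R0 by apply: lt_le_trans GR0.
apply: lt_le_trans (_ : 0 < Num.min s (Num.min d (d / G R0))) _.
  by rewrite !lt_min s0 d0 divr_gt0.
apply: al_ge; first by rewrite ge_min lexx.
move=> r k r0 sb.
have rd : d <= r.
  rewrite leNgt; apply/negP => rd; have := hd r r0 rd.
  by rewrite ltNge (le_trans sb (bdec k r0)).
have Gr := G_ge1 r0.
have ga : r * (1 + G r) <= a2 r by apply: a2g.
have p2 : 0 < (2:R) ^+ k by rewrite exprn_gt0.
have [prs|prs] := leP (phi r) s.
  have kG := G_ge r0 (le_trans prs sb).
  apply: divle_help => //; apply: (@le_trans _ _ (d * (2 ^+ k))).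
    by apply: ler_wpM2r; [exact: ltW|rewrite !ge_min lexx orbT].
  nra.
have rR0 : r < R0.
  move: prs; rewrite /phi -div1r ltr_pdivlMr ?ltr_pwDl // => h.
  by rewrite /R0 -div1r ltr_pdivlMr //; nra.
have pR0 : phi R0 <= b R0 k.
  apply: (le_trans _ (bmono k r0 (ltW rR0))); apply: (le_trans _ sb).
  have p1 : 0 < 1 + R0 by rewrite ltr_pwDl // ltW.
  rewrite /phi -div1r ler_pdivrMr // /R0.
  by rewrite mulrDr mulfV ?gt_eqF // mulr1; lra.
have kG := G_ge (ltW R00) pR0.
apply: divle_help => //; apply: (@le_trans _ _ (d / G R0 * G R0)).
  apply: ler_pM.
  - by rewrite !le_min !ltW // divr_gt0.
  - exact: ltW p2.
  - by rewrite !ge_min lexx !orbT.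
  - exact: kG.
rewrite divfK ?gt_eqF //; nra.
Qed.

Let al_unb M : exists s, 0 <= s /\ M <= al s.
Proof.
set m := Num.max M 0; have m0 : 0 <= m by rewrite le_max lexx orbT.
have Mm : M <= m by rewrite le_max lexx.
set s := Num.max 1 (Num.max m (b m 0 + 1)).
have s1 : 1 <= s by apply: lemax_l.
have sm : m <= s by apply: le_trans (lemax_r 1 _); apply: lemax_l.
have sb : b m 0 + 1 <= s by apply: le_trans (lemax_r 1 _); apply: lemax_r.
exists s; split; first by apply: le_trans s1.
apply: al_ge; first exact: le_trans sm.
move=> r k r0 sbr.
have rm : m < r.
  rewrite ltNge; apply/negP => rm.
  have := le_trans (bdec k r0) (bmono 0 r0 rm); lra.
have prs : phi r <= b r k.
  apply: (le_trans _ sbr); apply: (le_trans _ s1).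
  by rewrite /phi invf_le1 ?ltr_pwDl // lerDl.
have kG := G_ge r0 prs.
have ga : r * (1 + G r) <= a2 r by apply: a2g.
have p2 : 0 < (2:R) ^+ k by rewrite exprn_gt0.
apply: divle_help => //.
have : m * 2 ^+ k <= r * G r.
  by apply: ler_pM; [exact: m0|exact: ltW p2|exact: ltW rm|exact: kG].
nra.
Qed.

Let a1_ex : exists a1, classKinf a1 /\ forall s, 0 <= s -> a1 s <= al s.
Proof. exact: Llow_ex al_mono al_ge0 al_pos al_unb. Qed.

Lemma guas_lyap_core : exists W : 'rV[R]_n -> S -> R, GLyapunov ft E W.
Proof.
have [a1 [a1K a1al]] := a1_ex.
have [a1c a10 a1s a1u] := Kinf_parts a1K.
pose Wset x j := [set y : R | exists k z, ZGs E j z /\ y = 2 ^+ k * a1 (vnorm (Phi ft k x z))].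
pose W x j := sup (Wset x j).
have Wub x j y : Wset x j y -> y <= a2 (vnorm x).
  move=> [k [z [[w [Hw _]] ->]]].
  have zZ : ZG E z by exists w.
  have p2 : 0 < (2:R) ^+ k by rewrite exprn_gt0.
  have h1 : a1 (vnorm (Phi ft k x z)) <= (2 ^+ k)^-1 * a2 (vnorm x).
    apply: le_trans (al_b k (vnorm_ge0 x)).
    apply: le_trans (a1al _ (bge0 k (vnorm_ge0 x))).
    apply: sinc_le => //; [exact: vnorm_ge0|exact: bbound].
  apply: le_trans (ler_wpM2l (ltW p2) h1) _.
  by rewrite mulrA mulfV ?gt_eqF // mul1r.
have Wne x j : Wset x j !=set0.
  have [z [w [Hw w0]]] := walk_through HE j.
  by exists (2 ^+ 0 * a1 (vnorm (Phi ft 0 x z))), 0%N, z; split => //; exists w.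
have Wh x j : has_ubound (Wset x j) by exists (a2 (vnorm x)) => y /Wub.
have Wge x j y : Wset x j y -> y <= W x j by move=> h; apply: (ub_le_sup (Wh x j)).
exists W; rewrite /GLyapunov; exists a1, a2, (2^-1); split => //; split => //; split; first by rewrite invr_ge0 ler0n.
split; first by rewrite invf_lt1 ?ltr0n // ltr1n.
split.
  move=> x j; split.
    have [z [w [Hw w0]]] := walk_through HE j.
    apply: (@le_trans _ _ (2 ^+ 0 * a1 (vnorm (Phi ft 0 x z)))); first by rewrite mul1r.
    by apply: Wge; exists 0%N, z; split => //; exists w.
  by apply: ge_sup; [exact: Wne|move=> y /Wub].
move=> x j l i ejl.
apply: ge_sup; first exact: Wne.
move=> y [k [z' [z'Z ->]]].
have [z [zZ z0 zS]] := walk_cons HE ejl z'Z.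
have ez : Phi ft k.+1 x z = Phi ft k (ft x i) z'.
  by rewrite (@Phi_shift _ _ ft k x z z') ?z0 // => m; rewrite zS.
have hm : Wset x j (2 ^+ k.+1 * a1 (vnorm (Phi ft k.+1 x z))) by exists k.+1; exists z; split.
have := Wge x j _ hm; rewrite ez exprS => h.
have -> : 2 ^+ k * a1 (vnorm (Phi ft k (ft x i) z')) =
  2^-1 * (2 * 2 ^+ k * a1 (vnorm (Phi ft k (ft x i) z'))).
  by rewrite !mulrA mulVf ?mul1r // pnatr_eq0.
rewrite ler_pM2l; [exact: h|by rewrite invr_gt0 ltr0n].
Qed.
End Dir2b.

Lemma guas_lyap : exists W : 'rV[R]_n -> S -> R, GLyapunov ft E W.
Proof. by have [a2 [a2K a2g]] := a2_ex; exact: guas_lyap_core a2g. Qed.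
End Dir2.


Theorem mainTheorem6 (R : realType) (n : nat) (Sig : countType) (i0 : Sig)
  (S : finType) (E : S -> S -> Sig -> Prop) (HE : standing E)
  (ft : 'rV[R]_n -> Sig -> 'rV[R]_n) :
  GUAS ft (ZG E) <-> exists W : 'rV[R]_n -> S -> R, GLyapunov ft E W.
Proof.
split.
  move=> [b [bKL bb]]; exact: (@guas_lyap R n Sig S E ft HE b bKL bb).
by move=> [W HW]; exact: lyap_guas HW.
Qed.
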